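(* Let $q\ge1$, $N=2^q$, and let $B^{(1)}=(b_{i,j})_{i,j=1}^{N-1}$ be the symmetric Toeplitz matrix with $b_{i,i}=\frac{2N}3-1$, $b_{i,j}=\frac N6-1$ if $|i-j|=1$, and $b_{i,j}=-1$ if $|i-j|\ge2$. For $k=2,\dots,q$ define $B^{(k)}=R_kB^{(k-1)}R_k^T$, where $R_k:\mathbb R^{N/2^{k-2}-1}\to\mathbb R^{N/2^{k-1}-1}$ is $(R_k\nu)_i=\nu_{2i-1}+2\nu_{2i}+\nu_{2i+1}$. Let $D_{(k)}$ be the diagonal of $B^{(k)}$. Then $1\le\lambda_{\max}(D_{(k)}^{-1}B^{(k)})<3$ for all $1\le k\le q$.
   Context: $B^{(k)}$ has size $(N/2^{k-1}-1)\times(N/2^{k-1}-1)$; $R_k$ is $4$ times the standard full-weighting restriction operator. *)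

(* Defs.v *)
From mathcomp Require Import all_boot all_order all_algebra.
From mathcomp Require Import reals.
Set Implicit Arguments. Unset Strict Implicit. Unset Printing Implicit Defensive.
Import Order.TTheory GRing.Theory Num.Theory.
Local Open Scope ring_scope.

(* Indices are 0-based here: Rocq index i : 'I_n corresponds to the
   paper's 1-based index i+1. *)

Definition B1 (R : realType) (q : nat) : 'M[R]_(2 ^ q - 1) :=
  let N : R := (2 ^ q)%:R in
  \matrix_(i, j)
    if (i : nat) == j then 2 * N / 3 - 1
    else if `|(i : int) - (j : int)|%N == 1%N then N / 6 - 1
    else -1.

(* Restriction operator (4 x full weighting): (R nu)_i = nu_{2i-1} + 2 nu_{2i}
   + nu_{2i+1} (1-based); in 0-based indices row i has entries 1, 2, 1 in
   columns 2i, 2i+1, 2i+2. *)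
Definition Rmat (R : realType) (m n : nat) : 'M[R]_(m, n) :=
  \matrix_(i, a)
    if (a : nat) == (2 * i)%N then 1
    else if (a : nat) == (2 * i).+1 then 2
    else if (a : nat) == (2 * i).+2 then 1
    else 0.

(* Bseq R q j = B^(j+1), of size N/2^j - 1 = 2^(q-j) - 1. *)
Fixpoint Bseq (R : realType) (q j : nat) : 'M[R]_(2 ^ (q - j) - 1) :=
  match j with
  | 0 => castmx (congr1 (fun e => (2 ^ e - 1)%N) (esym (subn0 q)),
                 congr1 (fun e => (2 ^ e - 1)%N) (esym (subn0 q))) (B1 R q)
  | j'.+1 => Rmat R _ _ *m Bseq R q j' *m (Rmat R _ _)^T
  end.

Definition Bk (R : realType) (q k : nat) : 'M[R]_(2 ^ (q - k.-1) - 1) :=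
  Bseq R q k.-1.

Definition diag_part (R : realType) (n : nat) (A : 'M[R]_n) : 'M[R]_n :=
  diag_mx (\row_i A i i).

Definition jacobi_mx (R : realType) (n : nat) (A : 'M[R]_n) : 'M[R]_n :=
  invmx (diag_part A) *m A.

(* Main.v *)
Require Import Defs.
From mathcomp Require Import all_boot all_order all_algebra.
From mathcomp Require Import reals trigo.
From mathcomp Require Import zify ring lra.
Import Order.TTheory GRing.Theory Num.Theory.
Local Open Scope ring_scope.

Section S.
Variable R : realType.

Definition mf (a b : nat) : R :=
  if a == b then 4 else if (a == b.+1) || (b == a.+1) then 1 else 0.

Definition Bgen n (al be : R) : 'M[R]_n := \matrix_(i, j) (al * mf i j - be).

Lemma sum_ind n k (f : nat -> R) :
  \sum_(i < n) (if (i : nat) == k then f i else 0) = if (k < n)%N then f k else 0.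
Proof.
case: ltnP => hk.
  rewrite (bigD1 (Ordinal hk)) //= eqxx big1 ?addr0 // => i /eqP hi.
  by case: eqP => // ei; exfalso; apply: hi; apply: val_inj.
by rewrite big1 // => i _; case: eqP => // ei; move: (ltn_ord i); lia.
Qed.

Lemma sumR m n (i : 'I_m) (f : nat -> R) : (2 * m < n)%N ->
  \sum_(a < n) Rmat R m n i a * f a = f (2 * i)%N + 2 * f (2 * i).+1 + f (2 * i).+2.
Proof.
move=> hmn.
have hi := ltn_ord i.
transitivity (\sum_(a < n) ((if (a:nat) == (2 * i)%N then f a else 0)
   + (if (a:nat) == (2 * i).+1 then 2 * f a else 0)
   + (if (a:nat) == (2 * i).+2 then f a else 0))).
  apply: eq_bigr => a _; rewrite mxE.
  case: eqP => e1; case: eqP => e2; case: eqP => e3; try lia; ring.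
rewrite !big_split /= (sum_ind _ _ (fun a => 2 * f a)) !sum_ind !ifT //; lia.
Qed.

Lemma RgR m n (g : nat -> nat -> R) (i j : 'I_m) : (2 * m < n)%N ->
  (Rmat R m n *m (\matrix_(a < n, b < n) g a b) *m (Rmat R m n)^T) i j =
  let h b := g (2 * i)%N b + 2 * g (2 * i).+1 b + g (2 * i).+2 b in
  h (2 * j)%N + 2 * h (2 * j).+1 + h (2 * j).+2.
Proof.
move=> hmn; rewrite mxE.
under eq_bigr => b _ do rewrite [(_^T) _ _]mxE mulrC [(_ *m _) _ _]mxE.
under eq_bigr => b _ do under eq_bigr => a _ do rewrite [X in _ * X]mxE.
rewrite (@sumR m n j (fun b => \sum_(a < n) Rmat R m n i a * g a b)) //.
rewrite (@sumR m n i (fun a => g a (2 * j)%N)) // (@sumR m n i (fun a => g a (2 * j).+1)) //.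
by rewrite (@sumR m n i (fun a => g a (2 * j).+2)).
Qed.


Ltac mfsolve := rewrite /mf; repeat (first [rewrite ifT; [|lia] | rewrite ifN; [|lia]]).

Lemma mf_coarse (i j : nat) :
  (let h b := mf (2 * i)%N b + 2 * mf (2 * i).+1 b + mf (2 * i).+2 b in
  h (2 * j)%N + 2 * h (2 * j).+1 + h (2 * j).+2) = 8 * mf i j.
Proof.
rewrite /=.
case: (ltngtP i j) => hij.
- case: (eqVneq j i.+1) => e.
    mfsolve; ring.
  mfsolve; ring.
- case: (eqVneq i j.+1) => e.
    mfsolve; ring.
  mfsolve; ring.
- mfsolve; ring.
Qed.

Lemma RBR m n (al be : R) : (2 * m < n)%N ->
  Rmat R m n *m Bgen n al be *m (Rmat R m n)^T = Bgen m (8 * al) (16 * be).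
Proof.
move=> hmn; apply/matrixP => i j.
rewrite (@RgR m n (fun a b => al * mf a b - be)) //= [RHS]mxE -mulrA mulrCA -mf_coarse /=.
ring.
Qed.


Definition al (q j : nat) : R := 16 ^+ j * (2 ^ (q - j))%N%:R / 6.

Lemma Bseq_eq q j : (j < q)%N -> Defs.Bseq R q j = Bgen _ (al q j) (16 ^+ j).
Proof.
elim: j => [|j IH] hj.
  apply/matrixP => i k; rewrite castmxE !mxE /=.
  have -> : al q 0 = (2^q)%N%:R / 6 by rewrite /al subn0 expr0 mul1r.
  rewrite /mf expr0.
  rewrite (_ : (`|((i:int) - (k:int))%R|%N == 1%N) = ((i:nat) == k.+1) || ((k:nat) == i.+1)); last first.
    by apply/idP/idP; lia.
  move: (2 ^ q)%N => N.
  case: ((i:nat) == k); first by field.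
  by case: (_ || _); field.
rewrite /= IH; last by lia.
have [e he] : exists e, (q - j = e.+2)%N by exists (q - j).-2; lia.
rewrite RBR; last first.
  have -> : (q - j.+1 = e.+1)%N by lia.
  rewrite he !expnS; have := expn_gt0 2 e; lia.
rewrite exprS; congr Bgen.
rewrite /al he; have -> : (q - j.+1 = e.+1)%N by lia.
rewrite !expnS !natrM exprS; move: (2 ^ e)%N => N; move: (16 ^+ j) => x; by field.
Qed.


Lemma mf_split (i j : nat) : mf i j =
  4 * (if i == j then 1 else 0) + (if i == j.+1 then 1 else 0) + (if i.+1 == j then 1 else 0).
Proof.
rewrite /mf; case: (ltngtP i j) => h.
- case: (eqVneq j i.+1) => e; mfsolve; ring.
- case: (eqVneq i j.+1) => e; mfsolve; ring.
- mfsolve; ring.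
Qed.

Lemma mf_sym i j : mf i j = mf j i.
Proof. by rewrite /mf eq_sym orbC. Qed.

Lemma mf_ge0 i j : 0 <= mf i j.
Proof. rewrite /mf; case: ifP => _; last case: ifP => _; lra. Qed.

Lemma ind_le1 (b : bool) : (if b then 1 else 0 : R) <= 1.
Proof. case: b; lra. Qed.

Lemma colsum n j : \sum_(i < n) mf i j <= 6.
Proof.
under eq_bigr do rewrite mf_split.
rewrite !big_split /= -mulr_sumr.
have h1 := sum_ind n j (fun _ => 1 : R).
have h2 := sum_ind n j.+1 (fun _ => 1 : R).
have h3 : \sum_(i < n) (if i.+1 == j then 1 else 0 : R) <= 1.
  case: j {h1 h2} => [|j].
    by rewrite big1 //; lra.
  under eq_bigr do rewrite eqSS.
  rewrite (sum_ind n j (fun _ => 1 : R)); exact: ind_le1.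
rewrite /= in h1 h2; rewrite h1 h2.
have -> : 6 = 4 * 1 + 1 + 1 :> R by ring.
apply: lerD; [apply: lerD; [rewrite ler_pM2l //; exact: ind_le1 | exact: ind_le1] | exact: h3].
Qed.

Lemma rowsum n i : \sum_(j < n) mf i j <= 6.
Proof. under eq_bigr do rewrite mf_sym. exact: colsum. Qed.

Lemma upper n (al be a : R) (v : 'rV[R]_n) : 0 < be -> 0 <= al ->
  v *m Bgen n al be = a *: v ->
  a * \sum_i v 0 i ^+ 2 <= 6 * al * \sum_i v 0 i ^+ 2.
Proof.
move=> hbe hal ev.
have E (j : 'I_n) : \sum_i v 0 i * (al * mf i j - be) = a * v 0 j.
  have := congr1 (fun M : 'rV[R]_n => M 0 j) ev; rewrite !mxE => <-.
  by apply: eq_bigr => i _; rewrite mxE.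
have -> : a * \sum_i v 0 i ^+ 2 =
   \sum_j \sum_i (al * (v 0 j * v 0 i * mf i j)) - be * (\sum_j v 0 j) ^+ 2.
  rewrite mulr_sumr.
  have -> : be * (\sum_j v 0 j) ^+ 2 = \sum_j \sum_i be * (v 0 j * v 0 i).
    rewrite expr2 mulr_suml mulr_sumr; apply: eq_bigr => j _.
    by rewrite !mulr_sumr.
  rewrite -sumrB; apply: eq_bigr => j _; rewrite -sumrB.
  rewrite (_ : a * v 0 j ^+ 2 = v 0 j * (a * v 0 j)); last by ring.
  rewrite -E mulr_sumr; apply: eq_bigr => i _; ring.
have hsq : 0 <= be * (\sum_j v 0 j) ^+ 2 by apply: mulr_ge0; [lra | exact: sqr_ge0].
suff : \sum_j \sum_i (al * (v 0 j * v 0 i * mf i j)) <= 6 * al * \sum_i v 0 i ^+ 2 by lra.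
apply: (@le_trans _ _ (\sum_(j < n) \sum_(i < n) (al / 2 * (mf i j * v 0 j ^+ 2) + al / 2 * (mf i j * v 0 i ^+ 2)))).
  apply: ler_sum => j _; apply: ler_sum => i _.
  have := mf_ge0 i j; have := sqr_ge0 (v 0 j - v 0 i) => h1 h2.
  have := mulr_ge0 h2 h1; have := mulr_ge0 hal (mulr_ge0 h2 h1); nra.
have -> : \sum_(j < n) \sum_(i < n) (al / 2 * (mf i j * v 0 j ^+ 2) + al / 2 * (mf i j * v 0 i ^+ 2))
  = al / 2 * \sum_(j < n) (v 0 j ^+ 2 * \sum_(i < n) mf i j)
    + al / 2 * \sum_(i < n) (v 0 i ^+ 2 * \sum_(j < n) mf i j).
  under eq_bigr => j _ do rewrite big_split.
  rewrite big_split /=; congr (_ + _).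
    rewrite mulr_sumr; apply: eq_bigr => j _.
    rewrite [v 0 j ^+ 2 * _]mulr_sumr mulr_sumr; apply: eq_bigr => i _; ring.
  rewrite exchange_big mulr_sumr; apply: eq_bigr => i _ /=.
  rewrite [v 0 i ^+ 2 * _]mulr_sumr mulr_sumr; apply: eq_bigr => j _; ring.
have hP : \sum_(j < n) (v 0 j ^+ 2 * \sum_(i < n) mf i j) <= 6 * \sum_i v 0 i ^+ 2.
  rewrite mulr_sumr; apply: ler_sum => j _; rewrite mulrC.
  by apply: ler_wpM2r; [exact: sqr_ge0 | exact: colsum].
have hQ : \sum_(i < n) (v 0 i ^+ 2 * \sum_(j < n) mf i j) <= 6 * \sum_i v 0 i ^+ 2.
  rewrite mulr_sumr; apply: ler_sum => i _; rewrite mulrC.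
  by apply: ler_wpM2r; [exact: sqr_ge0 | exact: rowsum].
have hal2 : 0 <= al / 2 by lra.
have := ler_wpM2l hal2 hP; have := ler_wpM2l hal2 hQ; lra.
Qed.


Lemma jacobi_Bgen n (al be : R) : 4 * al - be != 0 ->
  jacobi_mx (Bgen n al be) = (4 * al - be)^-1 *: Bgen n al be.
Proof.
move=> hd; rewrite /jacobi_mx /diag_part.
have -> : \row_i Bgen n al be i i = const_mx (4 * al - be).
  by apply/matrixP => i j; rewrite !mxE /mf eqxx mulrC.
have -> : diag_mx (const_mx (4 * al - be)) = (4 * al - be)%:M :> 'M[R]_n.
  by apply/matrixP => i j; rewrite !mxE.
by rewrite invmx_scalar mul_scalar_mx.
Qed.

Lemma mulr_ind (x : R) (b : bool) : x * (if b then 1 else 0) = if b then x else 0.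
Proof. by case: b; rewrite ?mulr1 ?mulr0. Qed.

Lemma lower n (be : R) : 0 < be -> (3 <= n)%N ->
  exists2 lam : R, (exists2 v : 'rV_n, v *m Bgen n (be * n.+1%:R / 6) be = lam *: v & v != 0)
   & 4 * (be * n.+1%:R / 6) <= lam.
Proof.
move=> hbe hn.
set al := be * n.+1%:R / 6.
set p : R := n.+1%:R.
have hp4 : 4 <= p.
  by rewrite /p ler_nat.
have hp0 : p != 0 by apply/eqP => h; move: hp4; rewrite h; lra.
set th := pi *+ 2 / p.
have hpi := pi_gt0 R.
have hth : th = 2 * pi / p by rewrite /th mulr2n; congr (_ / _); ring.
have hth0 : 0 < th by rewrite hth; apply: divr_gt0; [lra | lra].
have hthpi : th <= pi / 2.
  rewrite hth ler_pdivrMr; last by lra.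
  have : pi * 4 <= pi * p by rewrite ler_pM2l.
  lra.
set w := fun k : nat => sin (k%:R * th).
have w0 : w 0%N = 0 by rewrite /w mul0r sin0.
have wp : w n.+1 = 0.
  by rewrite /w -/p /th mulrC divfK // sin2pi.
have rec k : w k + w k.+2 = 2 * cos th * w k.+1.
  rewrite /w (_ : k.+2%:R * th = k.+1%:R * th + th); last by rewrite !mulrSr; ring.
  rewrite (_ : k%:R * th = k.+1%:R * th - th); last by rewrite !mulrSr; ring.
  rewrite sinB sinD; ring.
have refl k : (k <= n.+1)%N -> w (n.+1 - k)%N = - w k.
  move=> hk; rewrite /w natrB // -/p mulrBl (_ : p * th = pi *+ 2); last by rewrite /th mulrC divfK.
  by rewrite addrC sinD2pi sinN.
have S0 : \sum_(i < n) w i.+1 = 0.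
  have h : \sum_(i < n) w i.+1 = - \sum_(i < n) w i.+1.
    rewrite {1}(reindex_inj rev_ord_inj) /= -sumrN; apply: eq_bigr => i _.
    rewrite (_ : (n - i.+1).+1 = n.+1 - i.+1)%N; last by have := ltn_ord i; lia.
    by rewrite refl // ltnS ltnW.
  lra.
exists (al * (4 + 2 * cos th)).
  exists (\row_(i < n) w i.+1).
    apply/matrixP => k j; rewrite (ord1 k) !mxE.
    under eq_bigr do rewrite !mxE.
    rewrite (eq_bigr (fun i : 'I_n => al * (4 * (if (i:nat) == j then w i.+1 else 0)
       + (if (i:nat) == j.+1 then w i.+1 else 0) + (if i.+1 == j then w i.+1 else 0))
       - be * w i.+1)); last first.
      move=> i _; rewrite mf_split.
      case: ((i:nat) == j); case: ((i:nat) == j.+1); case: (i.+1 == j); ring.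
    rewrite sumrB -!mulr_sumr S0 mulr0 subr0 !big_split /= -!mulr_sumr.
    rewrite (sum_ind n j (fun i => w i.+1)) (sum_ind n j.+1 (fun i => w i.+1)) ltn_ord.
    have -> : (if (j.+1 < n)%N then w j.+2 else 0) = w j.+2.
      case: ltnP => // hj; have -> : j.+1 = n by have := ltn_ord j; lia.
      by rewrite wp.
    have -> : \sum_(i < n) (if i.+1 == j then w i.+1 else 0) = w j.
      case E: (nat_of_ord j) => [|j'].
        by rewrite big1 // => i _.
      under eq_bigr do rewrite eqSS.
      rewrite (sum_ind n j' (fun i => w i.+1)) ifT //.
      by have := ltn_ord j; rewrite E; apply: ltnW.
    have h := rec j; rewrite -addrA [w j.+2 + w j]addrC h; ring.
  apply/negP => /eqP h.
  have hn0 : (0 < n)%N by apply: leq_trans hn.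
  have := congr1 (fun M : 'rV[R]_n => M 0 (Ordinal hn0)) h; rewrite !mxE /= /w mul1r.
  have : 0 < sin th by apply: sin_gt0_pi; apply/andP; split; lra.
  lra.
have hal : 0 <= al by rewrite /al; apply: mulr_ge0; [apply: mulr_ge0 |]; lra.
have : 0 <= cos th by apply: cos_ge0_pihalf; apply/andP; split; lra.
move=> hc; have := mulr_ge0 hal hc; nra.
Qed.


Lemma sumsq_gt0 n (v : 'rV[R]_n) : v != 0 -> 0 < \sum_i v 0 i ^+ 2.
Proof.
move=> hv; rewrite lt_def sumr_ge0 ?andbT; last by move=> i _; exact: sqr_ge0.
apply/negP => /eqP h; move/negP: hv; apply; apply/eqP/matrixP => i j.
rewrite (ord1 i) mxE.
have := @psumr_eq0P _ _ predT (fun k => v 0 k ^+ 2) (fun k _ => sqr_ge0 (v 0 k)) h j isT.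
by move/eqP; rewrite sqrf_eq0 => /eqP.
Qed.

Lemma gen_main n (be : R) : 0 < be -> ((n == 1) || (3 <= n))%N ->
  (exists a : R, eigenvalue (jacobi_mx (Bgen n (be * n.+1%:R / 6) be)) a /\ 1 <= a) /\
  (forall a : R, eigenvalue (jacobi_mx (Bgen n (be * n.+1%:R / 6) be)) a -> a < 3).
Proof.
move=> hbe hn.
set al := be * n.+1%:R / 6.
set d := 4 * al - be.
have hn1 : 2%:R <= n.+1%:R :> R.
  by rewrite ler_nat; case/orP: hn => [/eqP -> //|]; move=> h; exact: (leq_trans _ (leqW h)).
have hd : 0 < d by rewrite /d /al; nra.
rewrite jacobi_Bgen -/d; last by rewrite gt_eqF.
case/orP: hn => [/eqP En | hn3].
  subst n.
  have -> : d^-1 *: Bgen 1 al be = 1%:M.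
    apply/matrixP => i j; rewrite (ord1 i) (ord1 j) !mxE /mf /= mulr1n [al * 4]mulrC.
    by rewrite -/d mulVf // gt_eqF.
  split.
    exists 1; split => //; apply/eigenvalueP; exists (const_mx 1).
      by rewrite mulmx1 scale1r.
    apply/negP => /eqP h; have := congr1 (fun M : 'rV[R]_1 => M 0 0) h.
    rewrite !mxE => /eqP; rewrite oner_eq0.
    done.
  move=> a /eigenvalueP [v]; rewrite mulmx1 => h hv.
  have /eqP : (1 - a) *: v = 0 by rewrite scalerBl scale1r -h subrr.
  rewrite scaler_eq0 (negbTE hv) orbF subr_eq0 => /eqP <-; lra.
split.
  have [lam [v ev hv] hlam] := @lower n be hbe hn3.
  exists (lam / d); split.
    apply/eigenvalueP; exists v => //.
    by rewrite -scalemxAr ev scalerA mulrC.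
  rewrite ler_pdivlMr // mul1r; move: hlam; rewrite /d /al; lra.
move=> a /eigenvalueP [v ev hv].
have ev' : v *m Bgen n al be = (a * d) *: v.
  by rewrite mulrC -scalerA -ev scalemxAr scalerA mulfV ?scale1r // gt_eqF.
have hal : 0 <= al by rewrite /al; apply: mulr_ge0; [apply: mulr_ge0 |]; lra.
have := @upper n al be (a * d) v hbe hal ev'.
have hS := @sumsq_gt0 n v hv.
rewrite ler_pM2r //.
have hn4 : 4%:R <= n.+1%:R :> R by rewrite ler_nat.
rewrite /d /al => h.
move: h hn4; move: (n.+1%:R : R) => P h hP.
rewrite ltNge; apply/negP => ha.
have h1 : 0 <= (a - 3) * (4 * (be * P / 6) - be).
  apply: mulr_ge0; nra.
have h2 : 0 < be * (P - 3) by apply: mulr_gt0; lra.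
nra.
Qed.

End S.

Theorem lemma4p6 (R : realType) (q : nat) (hq : (1 <= q)%N) (k : nat)
  (hk : (1 <= k <= q)%N) :
  (exists a : R, eigenvalue (jacobi_mx (Bk R q k)) a /\ 1 <= a) /\
  (forall a : R, eigenvalue (jacobi_mx (Bk R q k)) a -> a < 3).
Proof.
have hj : (k.-1 < q)%N by lia.
rewrite /Bk (@Bseq_eq R q k.-1 hj).
have [e he] : exists e, (q - k.-1 = e.+1)%N by exists (q - k.-1).-1; lia.
have E : al R q k.-1 = 16 ^+ k.-1 * (2 ^ (q - k.-1) - 1).+1%:R / 6.
  by rewrite /al subn1 prednK // expn_gt0.
rewrite E; apply: gen_main; first by apply: exprn_gt0.
rewrite he; case: e {he E} => [//|e].
apply/orP; right; rewrite !expnS; have := expn_gt0 2 e; lia.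
Qed.
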